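(* Let $S$ be an inverse semigroup and $\mathcal M$ a quasi-generating set for $S$. Then $d_{\mathcal M\cup E(S)}=d_{\mathcal M}$, and for all $s,t\in S$, $$d_{\mathcal M}(s,t)=\begin{cases}\min\{k\ge 0\mid \exists\, m_1,\dots,m_k\in\mathcal M \text{ with } s=m_1\cdots m_k t\} & \text{if }(s,t)\in\mathcal L,\\ \infty & \text{if }(s,t)\notin\mathcal L\end{cases}$$ (with $k=0$ meaning $s=t$).
   Context: An inverse semigroup is a semigroup $S$ in which every $s$ has a unique $s^{-1}\in S$ with $ss^{-1}s=s$ and $s^{-1}ss^{-1}=s^{-1}$. $E(S)$ is the set of idempotents. Green's relation $\mathcal L$: $(s,t)\in\mathcal L$ iff $s^{-1}s=t^{-1}t$. A quasi-generating set is a subset $\mathcal G\subseteq S$ with $\mathcal G=\mathcal G^{-1}$ such that $S$ is generated as a semigroup by $\mathcal G\cup E(S)$. For a quasi-generating set $\mathcal G$, the Cayley metric $d_{\mathcal G}$ on $S$ is defined by $d_{\mathcal G}(s,t)=\infty$ if $(s,t)\notin\mathcal L$, and otherwise as the path distance from $s$ to $t$ in the graph whose vertices are the elements of the $\mathcal L$-class of $s$, with $u,v$ joined by an edge of length 1 whenever $gu=v$ for some $g\in\mathcal G$. *)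

(* Defs.v *)
From Stdlib Require Import List Classical ClassicalEpsilon.
Import ListNotations.
Set Implicit Arguments.

Section InvSemigroup.
Variables (T : Type) (mul : T -> T -> T) (inv : T -> T).

Definition is_inverse_semigroup : Prop :=
  (forall a b c, mul a (mul b c) = mul (mul a b) c) /\
  (forall s, mul (mul s (inv s)) s = s /\ mul (mul (inv s) s) (inv s) = inv s) /\
  (forall s x, mul (mul s x) s = s -> mul (mul x s) x = x -> x = inv s).

Definition idempotents (e : T) : Prop := mul e e = e.

Definition Lrel (s t : T) : Prop := mul (inv s) s = mul (inv t) t.

Inductive generated (A : T -> Prop) : T -> Prop :=
| gen_base : forall a, A a -> generated A a
| gen_mul : forall a b, generated A a -> generated A b -> generated A (mul a b).

Definition setU (A B : T -> Prop) (x : T) : Prop := A x \/ B x.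

Definition quasi_generating (G : T -> Prop) : Prop :=
  (forall x, G x <-> G (inv x)) /\
  (forall s, generated (setU G idempotents) s).

Definition cayley_adj (G : T -> Prop) (u v : T) : Prop :=
  Lrel u v /\ exists g, G g /\ (mul g u = v \/ mul g v = u).

Inductive walk (G : T -> Prop) : T -> T -> nat -> Prop :=
| walk_nil : forall u, walk G u u 0
| walk_cons : forall u w v n,
    cayley_adj G u w -> walk G w v n -> walk G u v (S n).

Definition is_graph_dist (G : T -> Prop) (s t : T) (d : option nat) : Prop :=
  match d with
  | None => forall n, ~ walk G s t n
  | Some n => walk G s t n /\ forall m, walk G s t m -> n <= m
  end.

(* Cayley metric d_G with values in option nat (None = infinity). *)
Definition cayley_dist (G : T -> Prop) (s t : T) : option nat :=
  epsilon (inhabits None)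
    (fun d => (~ Lrel s t /\ d = None) \/ (Lrel s t /\ is_graph_dist G s t d)).

Definition lprod (ms : list T) (t : T) : T := fold_right mul t ms.

End InvSemigroup.

(* Main.v *)
Require Import Defs.
From Stdlib Require Import List Classical ClassicalEpsilon Lia.
Import ListNotations.

Section X.
Context (T : Type) (mul : T -> T -> T) (inv : T -> T).
Context (HS : is_inverse_semigroup mul inv).
Local Infix "*" := mul.
Lemma A : forall a b c, a * (b * c) = (a * b) * c. Proof. apply HS. Qed.
Lemma B1 s : s * inv s * s = s. Proof. apply (proj1 (proj2 HS) s). Qed.
Lemma B2 s : inv s * s * inv s = inv s. Proof. apply (proj1 (proj2 HS) s). Qed.
Lemma C s x : s * x * s = s -> x * s * x = x -> x = inv s. Proof. apply (proj2 (proj2 HS)). Qed.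
Ltac ra := repeat rewrite <- A.
Lemma B1' s z : s * (inv s * (s * z)) = s * z. Proof. rewrite !A, B1; auto. Qed.
Lemma B2' s z : inv s * (s * (inv s * z)) = inv s * z. Proof. rewrite !A, B2; auto. Qed.
Lemma inv_inv s : inv (inv s) = s.
Proof. symmetry; apply C. apply B2. apply B1. Qed.
Lemma idem_inv e : e * e = e -> inv e = e.
Proof. intro H; symmetry; apply C; rewrite H; auto. Qed.
Lemma idl e z : e * e = e -> e * (e * z) = e * z.
Proof. intro H; rewrite A, H; auto. Qed.
Lemma idem_mul e f : e * e = e -> f * f = f -> (e * f) * (e * f) = e * f.
Proof.
  intros He Hf. set (x := inv (e * f)).
  assert (Hx1 : e * (f * (x * (e * f))) = e * f).
  { pose proof (B1 (e*f)) as H. fold x in H. ra. rewrite <- !A in H. exact H. }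
  assert (Hx2 : x * (e * (f * x)) = x).
  { pose proof (B2 (e*f)) as H. fold x in H. rewrite <- !A in H. exact H. }
  assert (Hx2' : forall z, x*(e*(f*(x*z))) = x*z) by (intro z; rewrite <- Hx2 at 3; ra; reflexivity).
  assert (Hy : f * (x * e) = x).
  { unfold x at 2. apply C; ra.
    - rewrite (idl f), (idl e) by auto. rewrite Hx1; auto.
    - rewrite (idl e), (idl f) by auto.
      rewrite Hx2'. auto. }
  assert (Hxx : x * x = x).
  { rewrite <- Hy at 1 2. ra. rewrite Hx2', Hy; auto. }
  assert (Hi : inv x = e * f) by (unfold x; apply inv_inv).
  rewrite idem_inv in Hi by auto. rewrite <- Hi; auto.
Qed.
Lemma idem_comm e f : e * e = e -> f * f = f -> e * f = f * e.
Proof.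
  intros He Hf.
  rewrite <- (idem_inv (e*f)) by (apply idem_mul; auto).
  symmetry; apply C; ra.
  - rewrite (idl f), (idl e) by auto. rewrite (A e f (e*f)), idem_mul; auto.
  - rewrite (idl e), (idl f) by auto. rewrite (A f e (f*e)), idem_mul; auto.
Qed.
Lemma ssi s : (inv s * s) * (inv s * s) = inv s * s.
Proof. rewrite A, B2; auto. Qed.
Lemma ssi' s : (s * inv s) * (s * inv s) = s * inv s.
Proof. rewrite A, B1; auto. Qed.
Lemma cm e f z : e*e = e -> f*f = f -> e*(f*z) = f*(e*z).
Proof. intros; rewrite A, (idem_comm e f), <- A; auto. Qed.
Lemma inv_mul a b : inv (a * b) = inv b * inv a.
Proof.
  symmetry; apply C; ra.
  - rewrite (A b (inv b)), (A (inv a) a), (cm (b*inv b) (inv a*a)) by (apply ssi' || apply ssi).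
    ra. rewrite B1', (A b (inv b) b), B1; auto.
  - rewrite (A (inv a) a), (A b (inv b)), (cm (inv a*a) (b*inv b)) by (apply ssi' || apply ssi).
    ra. rewrite B2', (A (inv a) a (inv a)), B2; auto.
Qed.
Lemma BK g u w : u = g * w -> inv u * u = inv w * w -> w = inv g * u.
Proof.
  intros Hu HL.
  transitivity (w * (inv u * u)). { rewrite HL, A, B1; auto. }
  rewrite Hu at 1 2. rewrite inv_mul. ra.
  rewrite (A w (inv w)), (A (inv g) g), (cm (w*inv w) (inv g*g)) by (apply ssi' || apply ssi).
  ra. rewrite (A w (inv w) w), B1, <- Hu; auto.
Qed.
Definition E s := inv s * s.
Lemma Lmono a x b : a = x * b -> E a = E a * E b.
Proof.
  intro H; unfold E. rewrite <- A. f_equal.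
  rewrite H at 2. rewrite <- A, (A b (inv b) b), B1, H; auto.
Qed.
Lemma Etrans a b c : E a = E a * E b -> E b = E b * E c -> E a = E a * E c.
Proof. intros H1 H2. rewrite H1 at 1. rewrite H2, A, <- H1; auto. Qed.
Lemma antisym a b : E a = E a * E b -> E b = E b * E a -> E a = E b.
Proof. intros H1 H2. rewrite H1, (idem_comm (E a) (E b)); auto; unfold E; apply ssi. Qed.
Lemma Eprod ms t : E (lprod mul ms t) = E (lprod mul ms t) * E t.
Proof.
  induction ms as [|m ms IH]; simpl.
  - unfold E; symmetry; apply ssi.
  - eapply Etrans; [|apply IH]. eapply Lmono; reflexivity.
Qed.
Lemma Lstep m ms t : Lrel mul inv (m * lprod mul ms t) t ->
  Lrel mul inv (m * lprod mul ms t) (lprod mul ms t) /\ Lrel mul inv (lprod mul ms t) t.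
Proof.
  unfold Lrel; fold (E (m * lprod mul ms t)); fold (E t); fold (E (lprod mul ms t)).
  intro HL.
  assert (H1 := Lmono _ m (lprod mul ms t) eq_refl).
  assert (H2 := Eprod ms t).
  assert (Heq : E (m * lprod mul ms t) = E (lprod mul ms t)).
  { apply antisym; auto. rewrite H2 at 1. rewrite <- HL. auto. }
  split; auto. rewrite <- Heq; auto.
Qed.
Lemma idem_step e u v : e * e = e -> v = e * u -> Lrel mul inv v u -> v = u.
Proof.
  intros He Hv HL. pose proof (BK e v u Hv HL) as H.
  rewrite idem_inv in H by auto. rewrite H, Hv, A, He; auto.
Qed.
Lemma walk_mono (G G' : T -> Prop) s t n : (forall x, G x -> G' x) ->
  walk mul inv G s t n -> walk mul inv G' s t n.
Proof.
  intros HG W; induction W as [u|u w v n [HL [g [Hg Hor]]] W IH].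
  - constructor.
  - econstructor; [|exact IH]. split; auto. exists g; auto.
Qed.
Lemma prod_walk (M : T -> Prop) t ms : forall s, (forall m, In m ms -> M m) ->
  s = lprod mul ms t -> Lrel mul inv s t -> walk mul inv M s t (length ms).
Proof.
  induction ms as [|m ms IH]; intros s HM Hs HL; simpl in *.
  - subst; constructor.
  - subst s. destruct (Lstep m ms t HL) as [H1 H2].
    econstructor; [|apply IH; eauto].
    split; auto. exists m; auto.
Qed.
Definition Rep (M : T -> Prop) s t n := exists ms : list T, length ms = n /\ (forall m, In m ms -> M m)
                               /\ s = lprod mul ms t.
Lemma Lsym a b : Lrel mul inv a b -> Lrel mul inv b a.
Proof. unfold Lrel; auto. Qed.
Lemma walk_prod_M (M : T -> Prop) (HM : forall x, M x <-> M (inv x)) s t n :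
  walk mul inv M s t n -> Rep M s t n.
Proof.
  intro W; induction W as [u|u w v n [HL [g [Hg Hor]]] W IH].
  - exists nil; simpl; repeat split; auto. intros m [].
  - destruct IH as [ms [Hl [Hin Hw]]].
    assert (Hu : exists m, M m /\ u = m * w).
    { destruct Hor as [H|H].
      - exists (inv g); split; [apply (proj1 (HM g)); auto|]. apply (BK g w u); [symmetry; auto|apply Lsym; auto].
      - exists g; auto. }
    destruct Hu as [m [Hm Hu]].
    exists (m :: ms); simpl; repeat split; auto.
    + intros x [<-|Hx]; auto.
    + rewrite Hu, Hw; auto.
Qed.
Lemma walk_prod_ME (M : T -> Prop) (HM : forall x, M x <-> M (inv x)) s t n :
  walk mul inv (setU M (idempotents mul)) s t n -> exists j, j <= n /\ Rep M s t j.
Proof.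
  intro W; induction W as [u|u w v n [HL [g [Hg Hor]]] W IH].
  - exists 0; split; auto. exists nil; simpl; repeat split; auto. intros m [].
  - destruct IH as [j [Hj [ms [Hl [Hin Hw]]]]].
    destruct Hg as [Hg|Hg].
    + assert (Hu : exists m, M m /\ u = m * w).
      { destruct Hor as [H|H].
        - exists (inv g); split; [apply (proj1 (HM g)); auto|]. apply (BK g w u); [symmetry; auto|apply Lsym; auto].
        - exists g; auto. }
      destruct Hu as [m [Hm Hu]].
      exists (S j); split; [lia|].
      exists (m :: ms); simpl; repeat split; auto.
      * intros x [<-|Hx]; auto.
      * rewrite Hu, Hw; auto.
    + assert (u = w).
      { unfold idempotents in Hg. destruct Hor as [H|H].
        - symmetry; apply (idem_step g u w); auto. apply Lsym; auto.
        - apply (idem_step g w u); auto. }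
      subst w. exists j; split; [lia|]. exists ms; auto.
Qed.
Lemma gen_list (A0 : T -> Prop) x : generated mul A0 x ->
  exists gs, (forall g, In g gs -> A0 g) /\ forall y, x * y = lprod mul gs y.
Proof.
  intro G; induction G as [a Ha|a b Ga [ga [Ha Ea]] Gb [gb [Hb Eb]]].
  - exists [a]; simpl; split; auto. intros g [<-|[]]; auto.
  - exists (ga ++ gb); split.
    + intros g Hg; apply in_app_or in Hg; destruct Hg; auto.
    + intro y. unfold lprod. rewrite fold_right_app. fold (lprod mul gb y).
      rewrite <- Eb. fold (lprod mul ga (b * y)). rewrite <- Ea, A; auto.
Qed.
Lemma reduce (M : T -> Prop) t gs : forall s, (forall g, In g gs -> setU M (idempotents mul) g) ->
  s = lprod mul gs t -> Lrel mul inv s t -> exists n, Rep M s t n.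
Proof.
  induction gs as [|g gs IH]; intros s Hg Hs HL; simpl in *.
  - exists 0, nil; simpl; repeat split; auto. intros m [].
  - subst s. destruct (Lstep g gs t HL) as [H1 H2].
    destruct (IH (lprod mul gs t) (fun x h => Hg x (or_intror h)) eq_refl H2) as [n H].
    destruct H as [ms [Hl [Hin Hw]]].
    destruct (Hg g (or_introl eq_refl)) as [Hm|Hi].
    + exists (S n), (g :: ms); simpl; repeat split; auto.
      * intros x [<-|Hx]; auto.
      * rewrite <- Hw; auto.
    + exists n, ms; repeat split; auto. rewrite <- Hw.
      apply (idem_step g); auto.
Qed.
Lemma exist_rep (M : T -> Prop) (HM : quasi_generating mul inv M) s t :
  Lrel mul inv s t -> exists n, Rep M s t n.
Proof.
  intro HL. destruct (gen_list _ _ (proj2 HM (s * inv t))) as [gs [Hg Eg]].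
  apply (reduce M t gs); auto.
  rewrite <- Eg, <- A. unfold Lrel in HL. rewrite <- HL, A, B1; auto.
Qed.
End X.
Arguments Rep {T} mul M s t n.
Lemma min_nat (P : nat -> Prop) : (exists n, P n) -> exists n, P n /\ forall m, P m -> n <= m.
Proof.
  intros [n Hn]. induction n as [n IH] using (well_founded_induction Wf_nat.lt_wf).
  destruct (classic (exists m, m < n /\ P m)) as [[m [Hm Pm]]|Hno].
  - exact (IH m Hm Pm).
  - exists n; split; auto. intros m Pm. destruct (Compare_dec.le_lt_dec n m); auto.
    exfalso; apply Hno; eauto.
Qed.
Lemma dist_uniq T mul inv (G : T -> Prop) s t d :
  ((~ Lrel mul inv s t /\ d = None) \/ (Lrel mul inv s t /\ is_graph_dist mul inv G s t d)) ->
  cayley_dist mul inv G s t = d.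
Proof.
  intro H. unfold cayley_dist.
  pose proof (epsilon_spec (inhabits None)
    (fun d => (~ Lrel mul inv s t /\ d = None) \/ (Lrel mul inv s t /\ is_graph_dist mul inv G s t d))
    (ex_intro _ d H)) as H2. cbv beta in H2.
  set (e := epsilon _ _) in *. clearbody e.
  destruct H as [[HL ->]|[HL Hd]]; destruct H2 as [[HL' He]|[HL' He]]; try tauto.
  destruct d as [n|], e as [m|]; simpl in *.
  - f_equal. destruct Hd as [Hd1 Hd2], He as [He1 He2]. specialize (Hd2 m He1); specialize (He2 n Hd1); lia.
  - exfalso; apply (He n); apply Hd.
  - exfalso; apply (Hd m); apply He.
  - auto.
Qed.
Lemma dist_some T mul inv (G M : T -> Prop) s t k :
  Lrel mul inv s t -> Rep mul M s t k -> (forall m, Rep mul M s t m -> k <= m) ->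
  (forall n, walk mul inv G s t n -> exists j, j <= n /\ Rep mul M s t j) ->
  (forall n, Rep mul M s t n -> walk mul inv G s t n) ->
  cayley_dist mul inv G s t = Some k.
Proof.
  intros HL Hk Hmin H1 H2. apply dist_uniq. right; split; auto. simpl; split; auto.
  intros m W. destruct (H1 m W) as [j [Hj Rj]]. specialize (Hmin j Rj). lia.
Qed.

Theorem lemma1p15 (S : Type) (mul : S -> S -> S) (inv : S -> S)
  (HS : is_inverse_semigroup mul inv)
  (M : S -> Prop) (HM : quasi_generating mul inv M) :
  (forall s t, cayley_dist mul inv (setU M (idempotents mul)) s t
               = cayley_dist mul inv M s t) /\
  (forall s t,
     (Lrel mul inv s t ->
        exists k,
          cayley_dist mul inv M s t = Some k /\
          (exists ms : list S, length ms = k /\ (forall m, In m ms -> M m)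
                               /\ s = lprod mul ms t) /\
          (forall j, (exists ms : list S, length ms = j /\ (forall m, In m ms -> M m)
                                          /\ s = lprod mul ms t) -> k <= j)) /\
     (~ Lrel mul inv s t -> cayley_dist mul inv M s t = None)).
Proof.
  assert (Hnone : forall G s t, ~ Lrel mul inv s t -> cayley_dist mul inv G s t = None).
  { intros G s t HL. apply dist_uniq. left; auto. }
  assert (Hk : forall s t, Lrel mul inv s t -> exists k, Rep mul M s t k /\ forall m, Rep mul M s t m -> k <= m).
  { intros s t HL. apply min_nat. eapply exist_rep; eauto. }
  assert (HRM : forall s t n, Lrel mul inv s t -> Rep mul M s t n -> walk mul inv M s t n).
  { intros s t n HL [ms [Hl [Hin Hs]]]. subst n. eapply prod_walk; eauto. }
  assert (HMd : forall s t k, Lrel mul inv s t -> Rep mul M s t k -> (forall m, Rep mul M s t m -> k <= m) ->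
     cayley_dist mul inv M s t = Some k).
  { intros s t k HL R Hm. apply dist_some with M; auto.
    intros n W. exists n; split; auto. eapply walk_prod_M; eauto. apply HM. }
  split.
  - intros s t. destruct (classic (Lrel mul inv s t)) as [HL|HL].
    + destruct (Hk s t HL) as [k [R Hm]]. rewrite (HMd s t k HL R Hm).
      apply dist_some with M; auto.
      * intros n W. eapply walk_prod_ME; eauto. apply HM.
      * intros n Rn. apply walk_mono with M; [intros x Hx; left; auto|]. auto.
    + rewrite !Hnone; auto.
  - intros s t; split.
    + intro HL. destruct (Hk s t HL) as [k [R Hm]]. exists k; split; [|split]; auto.
    + apply Hnone.
Qed.
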